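(* Let $d$ be a positive integer and let $M$ be the $d\times d$ lower triangular integer matrix with entries $M_{ij}=\binom{i}{j}$ for $1\leqslant j\leqslant i\leqslant d$ and $M_{ij}=0$ for $j>i$. Call a vector $r\in\mathbb{R}^d$ stable if for every $k\in\mathbb{N}_{>0}$ the last coordinate of $M^k r$ is an integer. Then the set of all stable vectors is a discrete subgroup of $\mathbb{R}^d$. *)

(* Defs.v *)
From mathcomp Require Import all_boot all_order all_algebra.
From mathcomp Require Import reals.
Set Implicit Arguments. Unset Strict Implicit. Unset Printing Implicit Defensive.
Import Order.TTheory GRing.Theory Num.Theory.
Local Open Scope ring_scope.

(* Dimension d = n.+1 (d positive).  Indices i j : 'I_d stand for the
   paper's 1-based indices i+1, j+1. *)
Definition binomM (R : realType) (n : nat) : 'M[R]_n.+1 :=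
  \matrix_(i < n.+1, j < n.+1)
     (if (j <= i)%N then ('C(i.+1, j.+1))%:R else 0).

Definition stable (R : realType) (n : nat) (r : 'cV[R]_n.+1) : Prop :=
  forall k : nat, (0 < k)%N ->
    exists z : int, ((binomM R n) ^+ k *m r) ord_max 0 = z%:~R.

(* S is a discrete subgroup of R^d: an additive subgroup in which every point
   is isolated (w.r.t. the sup-norm, which induces the usual topology). *)
Definition discrete_subgroup (R : realType) (n : nat) (S : 'cV[R]_n.+1 -> Prop)
  : Prop :=
  [/\ S 0,
      (forall r s, S r -> S s -> S (r - s)) &
      (forall r, S r -> exists2 e : R, 0 < e &
         forall s, S s -> (forall i : 'I_n.+1, `|s i 0 - r i 0| < e) -> s = r)].

(* Main.v *)
Require Import Defs.
From mathcomp Require Import all_boot all_order all_algebra.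
From mathcomp Require Import reals.
From mathcomp Require Import ring lra zify.
Set Implicit Arguments. Unset Strict Implicit. Unset Printing Implicit Defensive.
Import Order.TTheory GRing.Theory Num.Theory.
Local Open Scope ring_scope.

Lemma bin_mul_sub a b c : (c <= b)%N ->
  ('C(a, b) * 'C(b, c) = 'C(a, c) * 'C(a - c, b - c))%N.
Proof.
move=> cb; case: (leqP b a) => ba; last first.
  rewrite (bin_small ba) mul0n; case: (leqP c a) => ca.
    by rewrite (@bin_small (a - c) (b - c)) ?muln0 //; lia.
  by rewrite (bin_small ca).
have ca : (c <= a)%N by lia.
have h1 := bin_fact cb. have h2 := bin_fact ba. have h3 := bin_fact ca.
have h4 : (b - c <= a - c)%N by lia.
have h5 := bin_fact h4.
have e : (a - c - (b - c) = a - b)%N by lia.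
rewrite e in h5.
apply/eqP; rewrite -(eqn_pmul2r (fact_gt0 c)) -(eqn_pmul2r (fact_gt0 (b - c)))
  -(eqn_pmul2r (fact_gt0 (a - b))).
apply/eqP.
transitivity ('C(a, b) * ('C(b, c) * (c`! * (b - c)`!)) * (a - b)`!)%N; first ring.
rewrite h1.
transitivity ('C(a, b) * (b`! * (a - b)`!))%N; first ring.
rewrite h2 -h3 -h5; ring.
Qed.

Section S.
Variables (R : realType) (n : nat).

Lemma powM k (i j : 'I_n.+1) : (binomM R n ^+ k) i j =
  if (j <= i)%N then ('C(i.+1, j.+1))%:R * (k%:R) ^+ (i - j) else 0.
Proof.
elim: k i j => [|k IH] i j.
  rewrite expr0 mxE /=; case: (leqP j i) => ji.
    case: (eqVneq i j) => [->|nij]; first by rewrite binn subnn expr0 mulr1.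
    have : (i - j != 0)%N by rewrite subn_eq0 -ltnNge ltn_neqAle eq_sym nij ji.
    by rewrite expr0n => /negbTE ->; rewrite mulr0.
  by case: (eqVneq i j) => // eij; move: ji; rewrite eij ltnn.
rewrite exprS -mulmxE mxE.
under eq_bigr => l _ do rewrite IH mxE.
case: (leqP j i) => ji; last first.
  apply: big1 => l _; case: (leqP l i) => li; last by rewrite mul0r.
  by rewrite leqNgt (leq_ltn_trans li ji) mulr0.
rewrite -(big_mkord xpredT (fun l : nat => (if (l <= i)%N then ('C(i.+1, l.+1))%:R else 0) *
   (if (j <= l)%N then ('C(l.+1, j.+1))%:R * (k%:R) ^+ (l - j) else (0:R)))).
have ho := ltn_ord i; have hj := ltn_ord j.
rewrite (@big_cat_nat _ _ _ j) /=; [|lia|lia].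
rewrite big1_seq ?add0r; last first.
  move=> l /andP[_]; rewrite mem_index_iota => /andP[_ lj].
  by rewrite (leqNgt j l) lj mulr0.
rewrite (@big_cat_nat _ _ _ i.+1) /=; [|lia|lia].
rewrite [X in _ + X]big1_seq ?addr0; last first.
  move=> l /andP[_]; rewrite mem_index_iota => /andP[il _].
  by rewrite (leqNgt l i) il mul0r.
rewrite -{1}[nat_of_ord j]add0n big_addn big_mkord.
have -> : (i.+1 - j = (i - j).+1)%N by lia.
rewrite -natr1 exprD1n mulr_sumr; apply: eq_bigr => m _.
have h1 : (m + j <= i)%N by have := ltn_ord m; lia.
rewrite h1 leq_addl addnK mulrA -natrM bin_mul_sub; last by lia.
have -> : (i.+1 - j.+1 = i - j)%N by lia.
have -> : ((m + j).+1 - j.+1 = m)%N by lia.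
rewrite natrM -mulr_natl; ring.
Qed.

Lemma lastcoord k (t : 'cV[R]_n.+1) : ((binomM R n ^+ k) *m t) ord_max 0 =
  \sum_(j < n.+1) ('C(n.+1, j.+1))%:R * t j 0 * (k%:R) ^+ (n - j).
Proof.
rewrite mxE; apply: eq_bigr => j _; rewrite powM /= -ltnS ltn_ord.
by rewrite -mulrA [_ ^+ _ * _]mulrC mulrA.
Qed.

Let Cj (j : 'I_n.+1) : R := ('C(n.+1, j.+1))%:R.

Lemma Cj_neq0 j : Cj j != 0.
Proof. by rewrite /Cj pnatr_eq0 -lt0n bin_gt0 ltn_ord. Qed.

Lemma poly_zero (c : 'I_n.+1 -> R) :
  (forall k : nat, (0 < k <= n.+1)%N -> \sum_(j < n.+1) c j * (k%:R) ^+ (n - j) = 0) ->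
  forall j, c j = 0.
Proof.
move=> hk.
pose p : {poly R} := \sum_(j < n.+1) c j *: 'X^(n - j).
have coefp m : p`_m = \sum_(j < n.+1) c j * (m == n - j)%N%:R.
  by rewrite /p coef_sum; apply: eq_bigr => j _; rewrite coefZ coefXn.
have hp : p = 0.
  apply/eqP; apply/negPn/negP => pn0.
  have szp : (size p <= n.+1)%N.
    apply/leq_sizeP => m hm; rewrite coefp big1 // => j _.
    have : (m == n - j)%N = false by apply/negbTE; lia.
    by move ->; rewrite mulr0.
  pose rs := [seq (m.+1)%:R : R | m <- iota 0 n.+1].
  have := max_poly_roots pn0 (rs := rs).
  rewrite size_map size_iota ltnNge szp /= => H.
  have h2 : uniq rs.
    rewrite map_inj_uniq ?iota_uniq // => a b /eqP; rewrite eqr_nat eqSS => /eqP //.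
  suff h1 : all (root p) rs by have := H h1 h2.
    apply/allP => x /mapP[m]; rewrite mem_iota add0n => /andP[_ hm] ->.
    rewrite /root /p horner_sum; apply/eqP; rewrite -[RHS](hk m.+1); last by apply/andP; split; [done | by move: hm; rewrite ltnS].
    by apply: eq_bigr => j _; rewrite hornerZ hornerXn.
move=> j.
have := coefp (n - j)%N; rewrite hp coef0 (bigD1 j) //= eqxx mulr1 big1 ?addr0.
  by move=> <-.
move=> l hl; have : (n - j == n - l)%N = false.
  apply/negbTE; have := ltn_ord j; have := ltn_ord l; move: hl.
  rewrite -(inj_eq val_inj) /= => hl; lia.
by move ->; rewrite mulr0.
Qed.


Lemma int_small (z : int) : `|z%:~R : R| < 1 -> z = 0.
Proof.
rewrite -intr_norm ltrz1 => h; apply/eqP; rewrite -normr_le0; lia.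
Qed.

Lemma small_stable : exists2 e : R, 0 < e &
  forall t : 'cV[R]_n.+1, stable t -> (forall i, `|t i 0| < e) -> t = 0.
Proof.
pose K : R := \sum_(j < n.+1) ('C(n.+1, j.+1) * (n.+1) ^ n)%N%:R.
have K0 : 0 <= K by apply: sumr_ge0 => j _; apply: ler0n.
exists (K + 1)^-1; first by rewrite invr_gt0; lra.
move=> t st small.
have hc := @poly_zero (fun j => ('C(n.+1, j.+1))%:R * t j 0).
have ht : forall j, t j 0 = 0.
  suff hz : (forall k : nat, (0 < k <= n.+1)%N -> \sum_(j < n.+1) ('C(n.+1, j.+1))%:R * t j 0 * (k%:R) ^+ (n - j) = 0).
    by move=> j; have /eqP := hc hz j; rewrite mulf_eq0 (negbTE (Cj_neq0 j)) /= => /eqP.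
  move=> k /andP[k0 kn]; have [z hz] := st k k0.
  rewrite -lastcoord hz; suff -> : z = 0 by []; apply: int_small.
  rewrite -hz lastcoord.
  apply: (le_lt_trans (ler_norm_sum _ _ _)).
  apply: (@le_lt_trans _ _ (K * (K + 1)^-1)); last first.
    by rewrite ltr_pdivrMr ?mul1r; lra.
  rewrite /K mulr_suml; apply: ler_sum => l _.
  rewrite !normrM natrM -mulrA [_ * `|_|]mulrC.
  have hb : `|k%:R ^+ (n - l)| <= ((n.+1) ^ n)%:R :> R.
    rewrite normrX normr_nat -natrX ler_nat.
    apply: (@leq_trans ((n.+1) ^ (n - l))).
      by case: (n - l)%N => [//|e]; rewrite leq_exp2r.
    by rewrite leq_pexp2l // leq_subr.
  have ht0 : `|t l 0| <= (K + 1)^-1 by apply/ltW.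
  rewrite normr_nat mulrA; apply: ler_pM => //.
    by rewrite mulr_ge0.
  by apply: ler_pM.
by apply/matrixP => i j; rewrite (ord1 j) ht mxE.
Qed.
End S.

Theorem mainTheorem4 (R : realType) (n : nat) :
  discrete_subgroup (@stable R n).
Proof.
split.
- by move=> k _; exists 0; rewrite mulmx0 mxE.
- move=> r s hr hs k k0; have [z1 h1] := hr k k0; have [z2 h2] := hs k k0.
  exists (z1 - z2); rewrite mulmxBr [LHS]mxE [X in _ + X]mxE h1 h2 intrB.
  by [].
- move=> r hr; have [e e0 he] := small_stable R n.
  exists e => // s hs hsr.
  apply/eqP; rewrite -subr_eq0; apply/eqP; apply: he.
    move=> k k0; have [z1 h1] := hs k k0; have [z2 h2] := hr k k0.
    exists (z1 - z2); rewrite mulmxBr [LHS]mxE [X in _ + X]mxE h1 h2 intrB.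
    by [].
  by move=> i; rewrite !mxE.
Qed.
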